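(* For every integer $n\ge 2$ there exists a reduced integer $m$ with $n\le m\le 4n-6$ such that $|\mathcal{M}_x(n)|\le|\mathcal{M}_x(m)|$ for all $x\in\mathbb{R}$.
   Context: Let $p_i$ denote the $i$-th prime ($p_1=2,p_2=3,\dots$). A positive integer $2^{a_1}3^{a_2}5^{a_3}\cdots=\prod_i p_i^{a_i}$ (with $a_i=0$ for all sufficiently large $i$) is called reduced if $\left\lfloor\frac{a_i+1}{a_j+2}\right\rfloor<\frac{\log p_j}{\log p_i}$ for all $i,j\ne 1$, and $2^{a_1}<8p_j^2$ for every $j$ with $a_j=0$. For a positive integer $n$ and $x\in\mathbb{R}$, a positive divisor $d$ of $n$ is maximal with respect to $x$ if $d\le x$ and there is no other positive divisor $d'$ of $n$ with $d'\le x$ and $d\mid d'$; $\mathcal{M}_x(n)$ denotes the set of such divisors. *)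

(* Defs.v *)
From Stdlib Require Import Reals.
From mathcomp Require Import all_boot.

Set Implicit Arguments.
Unset Strict Implicit.
Unset Printing Implicit Defensive.

(* The exponent a_i of the prime p_i in m is [logn p m].  The indices i <> 1
   are exactly the primes p <> 2. *)
Definition reduced (m : nat) : Prop :=
  0 < m /\
  (forall p q : nat, prime p -> prime q -> p <> 2 -> q <> 2 ->
     Rlt (INR ((logn p m).+1 %/ (logn q m).+2)) (Rdiv (ln (INR q)) (ln (INR p)))) /\
  (forall q : nat, prime q -> logn q m = 0 -> 2 ^ logn 2 m < 8 * q ^ 2).

Definition leRb (d : nat) (x : R) : bool :=
  if Rle_dec (INR d) x then true else false.

Definition maxdivs (x : R) (n : nat) : seq nat :=
  [seq d <- divisors n |
     leRb d x &&
     all (fun d' => ~~ [&& leRb d' x, d %| d' & d' != d]) (divisors n)].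

(* Main.v *)
Require Import Defs.
From Stdlib Require Import Reals Lra Classical.
From mathcomp Require Import all_boot.
From mathcomp Require Import zify.

Set Implicit Arguments.
Unset Strict Implicit.
Unset Printing Implicit Defensive.


Lemma leRb_dc (x : R) a b : a <= b -> leRb b x -> leRb a x.
Proof.
move=> ab; rewrite /leRb.
case: Rle_dec => // Hb _; case: Rle_dec => // Ha; exfalso; apply: Ha.
apply: Rle_trans Hb; apply: le_INR; exact/leP.
Qed.

Lemma mem_maxdivs (x : R) n d : 0 < n ->
  (d \in maxdivs x n) <->
  [/\ d %| n, leRb d x & forall r, prime r -> r * d %| n -> ~~ leRb (r * d) x].
Proof.
move=> n0; rewrite /maxdivs mem_filter -dvdn_divisors //; split.
- case/andP=> /andP[Hx /allP Hall] Hd; split=> // r pr Hr.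
  have := Hall (r * d); rewrite -dvdn_divisors // => /(_ Hr).
  have d0 : 0 < d by apply: dvdn_gt0 Hd.
  have -> : (r * d != d).
    apply/eqP=> E; have : r * d = 1 * d by rewrite E mul1n.
    move/eqP; rewrite eqn_pmul2r // => /eqP r1; by rewrite r1 in pr.
  move=> H; apply/negP=> Hl; move/negP: H; apply; by rewrite Hl dvdn_mull.
- case=> Hd Hx Hmax; rewrite Hd Hx andbT /=; apply/allP=> d'.
  rewrite -dvdn_divisors // => Hd'; apply/negP=> /and3P[Hx' /dvdnP[k Ek] Hne].
  have d'0 : 0 < d' by apply: dvdn_gt0 Hd'.
  have k1 : 1 < k.
    move: Ek Hne d'0; case: k => [|[|k]] //; first by move=> ->.
    by move=> -> ; rewrite mul1n eqxx.
  have pr := pdiv_prime k1.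
  have d0 : 0 < d by apply: dvdn_gt0 Hd.
  have Hrd : pdiv k * d %| d' by rewrite Ek dvdn_pmul2r // pdiv_dvd.
  have := Hmax _ pr (dvdn_trans Hrd Hd').
  by rewrite (leRb_dc (dvdn_leq d'0 Hrd) Hx').
Qed.


Lemma size_maxdivs_inj (x : R) n m (G : nat -> nat) : 0 < n -> 0 < m ->
  (forall d, d \in maxdivs x n -> G d \in maxdivs x m) ->
  {in maxdivs x n &, injective G} ->
  size (maxdivs x n) <= size (maxdivs x m).
Proof.
move=> n0 m0 HG Hinj; rewrite -(size_map G); apply: uniq_leq_size.
  by rewrite map_inj_in_uniq // filter_uniq // divisors_uniq.
by move=> y /mapP[d Hd ->]; apply: HG.
Qed.

Lemma two_adic u v i j : odd u -> odd v -> u * 2 ^ i = v * 2 ^ j -> u = v /\ i = j.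
Proof.
move=> ou ov E.
have Ei : logn 2 (u * 2 ^ i) = i by rewrite logn_Gauss ?coprime2n // pfactorK.
have Ej : logn 2 (v * 2 ^ j) = j by rewrite logn_Gauss ?coprime2n // pfactorK.
have ij : i = j by rewrite -Ei -Ej E.
split=> //; move: E; rewrite ij => /eqP; rewrite eqn_pmul2r ?expn_gt0 // => /eqP //.
Qed.

Lemma odd_decomp d : 0 < d -> exists2 c, odd c & d = c * 2 ^ logn 2 d.
Proof. by move=> d0; case: (pfactor_coprime (isT : prime 2) d0) => c; rewrite coprime2n; exists c. Qed.

Section Lift.
Variable x : R.
Fixpoint lexp (c e : nat) : nat :=
  if leRb (c * 2 ^ e) x then e else
  match e with 0 => 0 | e'.+1 => lexp c e' end.

Lemma lexp_le c e : lexp c e <= e.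
Proof. elim: e => [|e IH] /=; case: ifP => //; lia. Qed.

Lemma lexp_ok c e : leRb c x -> leRb (c * 2 ^ lexp c e) x.
Proof. move=> Hc; elim: e => [|e IH] /=; case: ifP => // _; by rewrite expn0 muln1. Qed.

Lemma lexp_max c e : lexp c e < e -> ~~ leRb (c * 2 ^ (lexp c e).+1) x.
Proof.
elim: e => [|e IH] //=; case: ifP => [_|He]; first lia.
have := lexp_le c e; rewrite leq_eqVlt => /orP[/eqP ->|lt _]; first by rewrite He.
exact: IH.
Qed.
End Lift.

Definition CLhyp (x : R) a N c :=
  [/\ c %| N, leRb c x & forall r, prime r -> r * c %| N -> ~~ leRb (c * 2 ^ a * r) x].

Lemma CL (x : R) a e N M (h : nat -> nat) : odd N -> odd M -> 0 < N -> 0 < M ->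
  (forall c, CLhyp x a N c -> CLhyp x e M (h c)) ->
  (forall c1 c2, CLhyp x a N c1 -> CLhyp x a N c2 -> h c1 = h c2 -> c1 = c2) ->
  size (maxdivs x (N * 2 ^ a)) <= size (maxdivs x (M * 2 ^ e)).
Proof.
move=> oN oM N0 M0 Hh Hinj.
have n0 : 0 < N * 2 ^ a by rewrite muln_gt0 N0 expn_gt0.
have m0 : 0 < M * 2 ^ e by rewrite muln_gt0 M0 expn_gt0.
pose oddp d := d %/ 2 ^ logn 2 d.
have Hdec : forall d, d \in maxdivs x (N * 2 ^ a) ->
   [/\ d = oddp d * 2 ^ logn 2 d, odd (oddp d), logn 2 d <= a & CLhyp x a N (oddp d)].
  move=> d /(mem_maxdivs _ _ n0) [Hd Hx Hmax].
  have d0 : 0 < d by apply: dvdn_gt0 Hd.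
  case: (odd_decomp d0) => c oc Ed.
  have Ec : oddp d = c by rewrite /oddp {1}Ed mulnK ?expn_gt0.
  rewrite Ec.
  have cN : c %| N.
    have : c %| N * 2 ^ a by apply: dvdn_trans Hd; rewrite Ed dvdn_mulr.
    by rewrite Gauss_dvdl // coprimeXr // coprimen2.
  have ba : logn 2 d <= a.
    have := dvdn_leq_log 2 n0 Hd; by rewrite logn_Gauss ?coprime2n // pfactorK.
  split=> //.
  split=> //; first by apply: leRb_dc Hx; rewrite Ed leq_pmulr ?expn_gt0.
  move=> r pr rc.
  have r0 : 0 < r by apply: prime_gt0.
  move: ba; rewrite leq_eqVlt => /orP[/eqP ba|ba].
  + have : r * d %| N * 2 ^ a by rewrite Ed mulnA -ba dvdn_pmul2r ?expn_gt0.
    move/(Hmax _ pr); apply: contra; apply: leRb_dc; by rewrite Ed ba mulnC.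
  + have : 2 * d %| N * 2 ^ a.
      rewrite Ed mulnCA -expnS; apply: dvdn_mul; first by apply: (dvdn_trans cN).
      by apply: dvdn_exp2l.
    move/(Hmax _ (isT : prime 2)); apply: contra; apply: leRb_dc; rewrite Ed.
    have : 2 ^ (logn 2 d).+1 <= 2 ^ a by rewrite leq_exp2l.
    rewrite expnS => H; rewrite mulnCA; apply: leq_trans (leq_mul (leqnn c) H) _.
    exact: leq_pmulr.
pose G d := h (oddp d) * 2 ^ lexp x (h (oddp d)) e.
apply: (@size_maxdivs_inj x _ _ G n0 m0).
- move=> d Hd; case: (Hdec d Hd) => _ _ _ Hc.
  case: (Hh _ Hc) => hM hx hr.
  apply/(mem_maxdivs _ _ m0); split.
  + by apply: dvdn_mul => //; rewrite dvdn_exp2l // lexp_le.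
  + exact: lexp_ok.
  + move=> r pr; have := lexp_le x (h (oddp d)) e.
    rewrite leq_eqVlt => /orP[/eqP E|lt].
    * rewrite /G E mulnA dvdn_pmul2r ?expn_gt0 // => /(hr _ pr); apply: contra.
      by apply: leRb_dc; lia.
    * move=> _; have := lexp_max lt; apply: contra; apply: leRb_dc.
      rewrite /G expnS mulnCA; apply: leq_mul => //; exact: prime_gt1.
- move=> d1 d2 H1 H2 E.
  case: (Hdec d1 H1) => E1 o1 b1 C1; case: (Hdec d2 H2) => E2 o2 b2 C2.
  case: (Hh _ C1) => hM1 _ _; case: (Hh _ C2) => hM2 _ _.
  have [Eh _] := two_adic (dvdn_odd hM1 oM) (dvdn_odd hM2 oM) E.
  have Ec := Hinj _ _ C1 C2 Eh.
  move/(mem_maxdivs _ _ n0): H1 => [Hd1 Hx1 Hm1].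
  move/(mem_maxdivs _ _ n0): H2 => [Hd2 Hx2 Hm2].
  have o0 : 0 < oddp d1 by case: C1 => /dvdn_gt0 -> .
  case: (ltngtP (logn 2 d1) (logn 2 d2)) => [lt|lt|eq].
  + have : 2 * d1 %| N * 2 ^ a.
      apply: dvdn_trans Hd2; rewrite E1 E2 -Ec mulnCA -expnS dvdn_mul //.
      by apply: dvdn_exp2l.
    move/(Hm1 _ (isT : prime 2)); rewrite (leRb_dc _ Hx2) //.
    rewrite E1 E2 -Ec; have : 2 ^ (logn 2 d1).+1 <= 2 ^ logn 2 d2 by rewrite leq_exp2l.
    rewrite expnS => H; rewrite mulnCA; exact: leq_mul (leqnn _) H.
  + have : 2 * d2 %| N * 2 ^ a.
      apply: dvdn_trans Hd1; rewrite E1 E2 -Ec mulnCA -expnS dvdn_mul //.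
      by apply: dvdn_exp2l.
    move/(Hm2 _ (isT : prime 2)); rewrite (leRb_dc _ Hx1) //.
    rewrite E1 E2 -Ec; have : 2 ^ (logn 2 d2).+1 <= 2 ^ logn 2 d1 by rewrite leq_exp2l.
    rewrite expnS => H; rewrite mulnCA; exact: leq_mul (leqnn _) H.
  + by rewrite E1 E2 Ec eq.
Qed.

Section Rlemmas.
Local Open Scope R_scope.



Lemma lnINR_pos (p : nat) : (1 < p)%N -> 0 < ln (INR p).
Proof.
move=> p1; rewrite -ln_1; apply: ln_increasing; first lra.
have : (INR 1 < INR p) by apply: lt_INR; apply/ltP.
by rewrite /=.
Qed.

Lemma div_le_l a b c : 0 < b -> a / b <= c -> a <= c * b.
Proof. move=> b0 H; replace a with ((a / b) * b) by (field; lra). by apply: Rmult_le_compat_r; lra. Qed.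

Lemma lt_div_r a b c : 0 < b -> c * b < a -> c < a / b.
Proof.
move=> b0 H; apply: (Rmult_lt_reg_r b) => //; replace (a / b * b) with a by (field; lra); lra.
Qed.

Lemma ln_le_nat (a b : nat) : (0 < a)%N -> (a <= b)%N -> ln (INR a) <= ln (INR b).
Proof.
move=> a0 ab; have ha : 0 < INR a by apply: lt_0_INR; apply/ltP.
have hab : INR a <= INR b by apply: le_INR; apply/leP.
case: (Rle_lt_or_eq_dec _ _ hab) => [lt|->]; last lra.
by apply: Rlt_le; apply: ln_increasing.
Qed.

Lemma ln_lt_nat (a b : nat) : (0 < a)%N -> (a < b)%N -> ln (INR a) < ln (INR b).
Proof.
move=> a0 ab; have ha : 0 < INR a by apply: lt_0_INR; apply/ltP.
apply: ln_increasing => //; apply: lt_INR; exact/ltP.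
Qed.

Lemma ratio_pos (p q : nat) : (1 < p)%N -> (1 < q)%N -> 0 < ln (INR q) / ln (INR p).
Proof. move=> p1 q1; apply: Rdiv_lt_0_compat; exact: lnINR_pos. Qed.

Lemma ratio_mono (p q q' : nat) : (1 < p)%N -> (1 < q)%N -> (q <= q')%N ->
  ln (INR q) / ln (INR p) <= ln (INR q') / ln (INR p).
Proof.
move=> p1 q1 qq; rewrite /Rdiv; apply: Rmult_le_compat_r.
  by apply: Rlt_le; apply: Rinv_0_lt_compat; apply: lnINR_pos.
by apply: ln_le_nat => //; apply: ltnW.
Qed.

Lemma ratio_gt1 (p q : nat) : (1 < p)%N -> (p < q)%N -> 1 < ln (INR q) / ln (INR p).
Proof.
move=> p1 pq; apply: lt_div_r; first exact: lnINR_pos.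
rewrite Rmult_1_l; apply: ln_lt_nat => //; exact: ltnW.
Qed.

Lemma expn_pow m n : (m ^ n)%N = Nat.pow m n.
Proof. by elim: n => //= n IH; rewrite expnS IH. Qed.

Lemma ratio_pow (p q t : nat) : (1 < p)%N -> (1 < q)%N ->
  ~ (INR t < ln (INR q) / ln (INR p)) -> (q <= p ^ t)%N.
Proof.
move=> p1 q1 H; have H' := Rnot_lt_le _ _ H.
have lp := lnINR_pos p1.
have := div_le_l lp H'.
rewrite -ln_pow; last by apply: lt_0_INR; apply/ltP; apply: ltnW.
rewrite -pow_INR => Hle.
have E : INR (Nat.pow p t) = INR (p ^ t)%N by rewrite expn_pow.
rewrite E in Hle.
case: (leqP q (p ^ t)) => // lt; exfalso.
have pt0 : (0 < p ^ t)%N by rewrite expn_gt0 (ltnW p1).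
have := ln_lt_nat pt0 lt; lra.
Qed.

Lemma ratio_lt1 (p q : nat) : (1 < q)%N -> (q < p)%N -> ln (INR q) / ln (INR p) < 1.
Proof.
move=> q1 qp; have p1 : (1 < p)%N by apply: ltn_trans qp.
have lp := lnINR_pos p1.
have := ln_lt_nat (ltnW q1) qp => H.
apply: (Rmult_lt_reg_r (ln (INR p))) => //.
replace (ln (INR q) / ln (INR p) * ln (INR p)) with (ln (INR q)) by (field; lra).
lra.
Qed.

Lemma INR_ge1 (n : nat) : (1 <= n)%N -> 1 <= INR n.
Proof. by move=> n1; have := le_INR 1 n; rewrite /=; apply; apply/leP. Qed.

End Rlemmas.

From mathcomp Require Import ssralg ring.


Ltac clear_junk := repeat match goal with
  | H : context [expn _ _] |- _ => clear H
  | H : context [dvdn _ _] |- _ => clear H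
  | H : context [coprime _ _] |- _ => clear H
  | H : context [prime _] |- _ => clear H
  | H : context [logn _ _] |- _ => clear H
  | H : context [leRb _ _] |- _ => clear H
  end.
Ltac slia := clear_junk; lia.

Lemma coprime_primes p q : prime p -> prime q -> p != q -> coprime p q.
Proof. by move=> pp pq ne; rewrite prime_coprime // dvdn_prime2. Qed.

Lemma logn_cop p k : coprime p k -> logn p k = 0.
Proof. by move=> c; rewrite -[k]muln1 logn_Gauss // logn1. Qed.

Lemma cop_pos p k : prime p -> coprime p k -> 0 < k.
Proof. by move=> pp; case: k => //; rewrite /coprime gcdn0 => /eqP E; rewrite E in pp. Qed.

Definition GoodOdd N O := exists chi : nat -> nat,
  [/\ forall c, c %| N -> chi c %| O /\ chi c <= c,
      forall c1 c2, c1 %| N -> c2 %| N -> chi c1 = chi c2 -> c1 = c2 &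
      forall c r, c %| N -> prime r -> r * chi c %| O ->
        exists2 s, prime s & s * c %| N /\ c * s * O <= N * chi c * r].

Section Trip.
Variables p q : nat.
Hypotheses (pp : prime p) (pq : prime q) (pneq : p != q).

Lemma cpq : coprime p q. Proof. exact: coprime_primes. Qed.
Lemma cqp : coprime q p. Proof. by rewrite coprime_sym cpq. Qed.

Lemma logn_trip x y k : coprime p k -> coprime q k ->
  logn p (p ^ x * q ^ y * k) = x /\ logn q (p ^ x * q ^ y * k) = y.
Proof.
move=> cpk cqk.
have k0 := cop_pos pp cpk.
have px0 : 0 < p ^ x by rewrite expn_gt0 prime_gt0.
have qy0 : 0 < q ^ y by rewrite expn_gt0 prime_gt0.
split.
- rewrite -mulnA lognM ?muln_gt0 ?qy0 ?k0 // pfactorK // logn_cop ?addn0 //.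
  by rewrite coprimeMr cpk andbT coprimeXr // cpq.
- rewrite (mulnC (p ^ x)) -mulnA lognM ?muln_gt0 ?px0 ?k0 // pfactorK //.
  by rewrite logn_cop ?addn0 // coprimeMr cqk andbT coprimeXr // cqp.
Qed.

Lemma dvd_trip x y k A B K : x <= A -> y <= B -> k %| K ->
  p ^ x * q ^ y * k %| p ^ A * q ^ B * K.
Proof. by move=> xA yB kK; rewrite !dvdn_mul // dvdn_exp2l. Qed.

Lemma logn_N A B K : coprime p K -> coprime q K ->
  logn p (p ^ A * q ^ B * K) = A /\ logn q (p ^ A * q ^ B * K) = B.
Proof. exact: logn_trip. Qed.

Lemma dec_trip A B K c : coprime p K -> coprime q K -> c %| p ^ A * q ^ B * K ->
  exists k, [/\ k %| K, coprime p k, coprime q k,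
     c = p ^ logn p c * q ^ logn q c * k & logn p c <= A /\ logn q c <= B].
Proof.
move=> cpK cqK Hc.
have K0 := cop_pos pp cpK.
have N0 : 0 < p ^ A * q ^ B * K by rewrite !muln_gt0 !expn_gt0 (prime_gt0 pp) (prime_gt0 pq) K0.
have c0 : 0 < c by apply: dvdn_gt0 Hc.
case: (pfactor_coprime pp c0) => c1 cp1 E1.
have c10 : 0 < c1 by apply: cop_pos pp cp1.
case: (pfactor_coprime pq c10) => k cqk E2.
have kc1 : k %| c1 by rewrite {1}E2 dvdn_mulr.
have cpk : coprime p k by apply: coprime_dvdr kc1 cp1.
have Ey : logn q c = logn q c1.
  rewrite {1}E1 lognM ?expn_gt0 ?(prime_gt0 pp) // (logn_cop (coprimeXr _ cqp)) addn0 //.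
have Ec : c = p ^ logn p c * q ^ logn q c * k.
  by rewrite Ey -mulnA (mulnC (q ^ _)) -E2 mulnC -E1.
have [lA lB] := logn_N A B cpK cqK.
exists k; split => //; last split.
- have : k %| p ^ A * q ^ B * K by apply: dvdn_trans Hc; rewrite Ec dvdn_mull.
  rewrite Gauss_dvdr // coprimeMr !coprimeXr // ?(coprime_sym k) ?cpk ?cqk //.
- by rewrite -[X in _ <= X]lA; apply: dvdn_leq_log.
- by rewrite -[X in _ <= X]lB; apply: dvdn_leq_log.
Qed.

Lemma dvd_trip_inv r x y k A B K : prime r -> coprime p k -> coprime q k ->
  coprime p K -> coprime q K -> r * (p ^ x * q ^ y * k) %| p ^ A * q ^ B * K ->
  [\/ r = p /\ x < A, r = q /\ y < B | [/\ r != p, r != q & r * k %| K]].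
Proof.
move=> pr cpk cqk cpK cqK H.
have K0 := cop_pos pp cpK.
have N0 : 0 < p ^ A * q ^ B * K by rewrite !muln_gt0 !expn_gt0 (prime_gt0 pp) (prime_gt0 pq) K0.
have [lA lB] := logn_N A B cpK cqK.
case: (eqVneq r p) => [E|rp].
  rewrite E in H *; apply: Or31; split=> //; rewrite -lA.
  have := dvdn_leq_log p N0 H; rewrite !mulnA -expnS.
  by have [-> _] := logn_trip x.+1 y cpk cqk.
case: (eqVneq r q) => [E|rq].
  rewrite E in H *; apply: Or32; split=> //; rewrite -lB.
  have := dvdn_leq_log q N0 H.
  have -> : q * (p ^ x * q ^ y * k) = p ^ x * q ^ y.+1 * k by rewrite expnS; ring.
  by have [_ ->] := logn_trip x y.+1 cpk cqk.
apply: Or33; split=> //.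
have : r * k %| p ^ A * q ^ B * K by apply: dvdn_trans H; rewrite dvdn_pmul2l ?prime_gt0 // dvdn_mull.
rewrite Gauss_dvdr // coprimeMr !coprimeXr //.
- by rewrite coprime_sym coprimeMr cqk andbT coprime_primes // eq_sym.
- by rewrite coprime_sym coprimeMr cpk andbT coprime_primes // eq_sym.
Qed.


Variables (A B t K : nat).
Hypotheses (cpK : coprime p K) (cqK : coprime q K) (t1 : 0 < t) (qpt : q <= p ^ t)
  (tAB : t * B.+2 <= A.+1).

Definition Nn := p ^ A * q ^ B * K.
Definition Np := p ^ (A - t) * q ^ B.+1 * K.

Definition chiS (c : nat) :=
  let x := logn p c in let y := logn q c in let k := c %/ (p ^ x * q ^ y) in
  if A.+1 <= x + t * y.+1 then p ^ (x - t) * q ^ y.+1 * k else c.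

Lemma tA : t <= A.
Proof. have : t * 2 <= t * B.+2 by rewrite leq_mul2l ltnS ltnS leq0n orbT.
slia. Qed.

Lemma NpE : Np * p ^ t = Nn * q.
Proof.
rewrite /Np /Nn -{2}(subnK tA) expnD expnS; ring.
Qed.

Lemma Np_le : Np <= Nn.
Proof.
have pt0 : 0 < p ^ t by rewrite expn_gt0 prime_gt0.
rewrite -(leq_pmul2r pt0) NpE; exact: leq_mul.
Qed.

Lemma chiS_view c : c %| Nn -> exists x y k,
  [/\ c = p ^ x * q ^ y * k, k %| K, coprime p k /\ coprime q k,
      x <= A /\ y <= B &
      chiS c = if A.+1 <= x + t * y.+1 then p ^ (x - t) * q ^ y.+1 * k else c].
Proof.
move=> Hc; case: (dec_trip cpK cqK Hc) => k [kK cpk cqk Ec [xA yB]].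
exists (logn p c), (logn q c), k; split=> //.
have Ek : c %/ (p ^ logn p c * q ^ logn q c) = k.
  by rewrite {1}Ec mulKn // muln_gt0 !expn_gt0 (prime_gt0 pp) (prime_gt0 pq).
by rewrite /chiS /= Ek.
Qed.


Lemma chi_moved_ge x y : y <= B -> A.+1 <= x + t * y.+1 -> t <= x.
Proof.
move=> yB mv; have : t * y.+1 <= t * B.+1 by rewrite leq_mul2l ltnS yB orbT.
have := mulnS t B.+1; slia.
Qed.

Lemma opS : GoodOdd Nn Np.
Proof.
have pt0 : 0 < p ^ t by rewrite expn_gt0 prime_gt0.
exists chiS; split.
- move=> c Hc; case: (chiS_view Hc) => x [y [k [Ec kK [cpk cqk] [xA yB] ->]]].
  case: ifP => mv.
  + have xt := chi_moved_ge yB mv.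
    split; first by apply: dvd_trip => //; slia.
    have -> : p ^ (x - t) * q ^ y.+1 * k = (p ^ (x - t) * q ^ y * k) * q by rewrite expnS; ring.
    have -> : c = (p ^ (x - t) * q ^ y * k) * p ^ t by rewrite Ec -{1}(subnK xt) expnD; ring.
    exact: leq_mul.
  + have : t <= t * y.+1 by rewrite leq_pmulr.
    move/negbT: mv; rewrite -ltnNge => mv tt.
    split=> //; rewrite Ec; apply: dvd_trip => //; slia.
- move=> c1 c2 H1 H2.
  case: (chiS_view H1) => x1 [y1 [k1 [E1 kK1 [cpk1 cqk1] [xA1 yB1] ->]]].
  case: (chiS_view H2) => x2 [y2 [k2 [E2 kK2 [cpk2 cqk2] [xA2 yB2] ->]]].
  have k10 := cop_pos pp cpk1; have k20 := cop_pos pp cpk2.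
  have canc : forall a b a' b', p ^ a * q ^ b * k1 = p ^ a' * q ^ b' * k2 ->
      [/\ a = a', b = b' & k1 = k2].
    move=> a b a' b' E.
    have [la lb] := logn_trip a b cpk1 cqk1.
    have [la' lb'] := logn_trip a' b' cpk2 cqk2.
    have ea : a = a' by rewrite -la -la' E.
    have eb : b = b' by rewrite -lb -lb' E.
    split=> //; move: E; rewrite ea eb => /eqP.
    by rewrite eqn_pmul2l ?muln_gt0 ?expn_gt0 ?(prime_gt0 pp) ?(prime_gt0 pq) // => /eqP.
  case: ifP => mv1; case: ifP => mv2.
  + move=> E; have [ea eb ek] := canc _ _ _ _ E.
    have := chi_moved_ge yB1 mv1; have := chi_moved_ge yB2 mv2 => t2 t1'.
    have ex : x1 = x2 by slia.
    by rewrite E1 E2 ek ex; case: eb => ->.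
  + rewrite E2 => E; have [ea eb ek] := canc _ _ _ _ E.
    have := chi_moved_ge yB1 mv1 => t1'; exfalso; move/negbT: mv2; rewrite -ltnNge.
    move: mv1; rewrite -ea -eb; have := mulnS t y1.+1; slia.
  + rewrite E1 => E; have [ea eb ek] := canc _ _ _ _ E.
    have := chi_moved_ge yB2 mv2 => t2; exfalso; move/negbT: mv1; rewrite -ltnNge.
    move: mv2; rewrite ea eb; have := mulnS t y2.+1; slia.
  + by [].
- move=> c r Hc pr; case: (chiS_view Hc) => x [y [k [Ec kK [cpk cqk] [xA yB] ->]]].
  have NpE' := NpE; have Npl := Np_le.
  case: ifP => mv.
  + have xt := chi_moved_ge yB mv.
    have key : c * Np = Nn * (p ^ (x - t) * q ^ y.+1 * k).
      apply/eqP; rewrite -(eqn_pmul2r pt0); apply/eqP.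
      have -> : c * Np * p ^ t = c * (Np * p ^ t) by ring.
      rewrite NpE Ec -{1}(subnK xt) expnD expnS; ring.
    move=> H; exists r => //; split; last first.
      by rewrite mulnAC key.
    case: (dvd_trip_inv pr cpk cqk cpK cqK H) => [[-> lt]|[-> lt]|[_ _ rk]].
    * rewrite Ec !mulnA -expnS; apply: dvd_trip => //; slia.
    * have -> : q * c = p ^ x * q ^ y.+1 * k by rewrite Ec expnS; ring.
      apply: dvd_trip => //; slia.
    * have -> : r * c = p ^ x * q ^ y * (r * k) by rewrite Ec; ring.
      exact: dvd_trip.
  + move=> H.
    have ineq : forall s r', s * Np <= Nn * r' -> c * s * Np <= Nn * c * r'.
      move=> s' r' Hs; have -> : c * s' * Np = c * (s' * Np) by ring.
      have -> : Nn * c * r' = c * (Nn * r') by ring.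
      exact: leq_mul.
    move/negbT: mv; rewrite -ltnNge ltnS => mv.
    rewrite Ec in H.
    case: (dvd_trip_inv pr cpk cqk cpK cqK H) => [[-> lt]|[-> lt]|[_ _ rk]].
    * exists p => //; split; first by rewrite Ec !mulnA -expnS; apply: dvd_trip => //; slia.
      apply: ineq; rewrite mulnC; exact: leq_mul.
    * case: (ltngtP y B) => yB'.
      -- exists q => //; split.
           have -> : q * c = p ^ x * q ^ y.+1 * k by rewrite Ec expnS; ring.
           by apply: dvd_trip.
         apply: ineq; rewrite mulnC; exact: leq_mul.
      -- slia.
      -- exists p => //; split.
           have tb : 0 < t * B.+1 by rewrite muln_gt0 t1.
           rewrite Ec !mulnA -expnS; apply: dvd_trip => //; slia.
         apply: ineq; rewrite -NpE mulnC; apply: leq_mul => //.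
         by rewrite -{1}(expn1 p) leq_exp2l // prime_gt1.
    * exists r => //; split.
        have -> : r * c = p ^ x * q ^ y * (r * k) by rewrite Ec; ring.
        exact: dvd_trip.
      apply: ineq; rewrite mulnC; exact: leq_mul.
Qed.
End Trip.


Lemma GoodOdd_refl N : GoodOdd N N.
Proof.
exists id; split=> //.
move=> c r Hc pr H; exists r => //; split=> //.
have E : c * r * N = N * c * r by ring.
by rewrite /= E.
Qed.

Lemma GoodOdd_trans N1 N2 N3 : 0 < N1 -> 0 < N2 ->
  GoodOdd N1 N2 -> GoodOdd N2 N3 -> GoodOdd N1 N3.
Proof.
move=> N10 N20 [f [f1 f2 f3]] [g [g1 g2 g3]].
exists (fun c => g (f c)); split.
- move=> c Hc; have [Hf Hf'] := f1 c Hc; have [Hg Hg'] := g1 _ Hf.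
  split=> //; exact: leq_trans Hf'.
- move=> c1 c2 H1 H2 E; apply: f2 => //; apply: g2 => //.
  + by case: (f1 _ H1).
  + by case: (f1 _ H2).
- move=> c r Hc pr H.
  have [Hf _] := f1 c Hc.
  have fc0 : 0 < f c by apply: dvdn_gt0 Hf.
  case: (g3 _ _ Hf pr H) => s1 ps1 [Hs1 I1].
  case: (f3 _ _ Hc ps1 Hs1) => s ps [Hs I2].
  exists s => //; split=> //.
  have s10 : 0 < s1 by apply: prime_gt0.
  have K0 : 0 < N2 * f c * s1 by rewrite !muln_gt0 N20 fc0.
  rewrite -(leq_pmul2l K0).
  have := leq_mul I2 I1.
  have -> : c * s * N2 * (f c * s1 * N3) = N2 * f c * s1 * (c * s * N3) by ring.
  have -> : N1 * f c * s1 * (N2 * g (f c) * r) = N2 * f c * s1 * (N1 * g (f c) * r) by ring.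
  by [].
Qed.

Lemma stage1_le (x : R) N O a e : GoodOdd N O -> odd N -> odd O -> 0 < N -> 0 < O ->
  N * 2 ^ a <= O * 2 ^ e ->
  size (maxdivs x (N * 2 ^ a)) <= size (maxdivs x (O * 2 ^ e)).
Proof.
move=> [f [f1 f2 f3]] oN oO N0 O0 le.
apply: (CL (h := f)) => //.
- move=> c [Hc Hx Hr]; have [Hf Hf'] := f1 c Hc.
  split=> //; first exact: leRb_dc Hx.
  move=> r pr H; case: (f3 _ _ Hc pr H) => s ps [Hs I].
  have := Hr _ ps Hs; apply: contra; apply: leRb_dc.
  rewrite -(leq_pmul2r O0).
  apply: leq_trans (_ : N * 2 ^ a * (f c * r) <= _).
    have -> : c * 2 ^ a * s * O = (c * s * O) * 2 ^ a by ring.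
    have -> : N * 2 ^ a * (f c * r) = (N * f c * r) * 2 ^ a by ring.
    by rewrite leq_mul2r I orbT.
  apply: leq_trans (leq_mul le (leqnn (f c * r))) _.
  have -> : O * 2 ^ e * (f c * r) = f c * 2 ^ e * r * O by ring.
  by [].
- by move=> c1 c2 [H1 _ _] [H2 _ _]; apply: f2.
Qed.


Definition oddred O := forall p q, prime p -> prime q -> p <> 2 -> q <> 2 ->
  Rlt (INR ((logn p O).+1 %/ (logn q O).+2)) (Rdiv (ln (INR q)) (ln (INR p))).

Lemma split_trip p q N : prime p -> prime q -> p != q -> 0 < N ->
  exists K, [/\ coprime p K, coprime q K & N = p ^ logn p N * q ^ logn q N * K].
Proof.
move=> pp pq pneq N0.
case: (pfactor_coprime pp N0) => c1 cp1 E1.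
have c10 : 0 < c1 by apply: cop_pos pp cp1.
case: (pfactor_coprime pq c10) => k cqk E2.
have kc1 : k %| c1 by rewrite {1}E2 dvdn_mulr.
have cpk : coprime p k by apply: coprime_dvdr kc1 cp1.
have cqp : coprime q p by apply: coprime_primes => //; rewrite eq_sym.
have Ey : logn q N = logn q c1.
  rewrite {1}E1 lognM ?expn_gt0 ?(prime_gt0 pp) // (logn_cop (coprimeXr _ cqp)) addn0 //.
exists k; split=> //.
by rewrite Ey -mulnA (mulnC (q ^ _)) -E2 mulnC -E1.
Qed.

Lemma odd_of_prime p : prime p -> p <> 2 -> odd p.
Proof. by move=> pp p2; case: (even_prime pp). Qed.

Lemma stage1 N : odd N -> 0 < N ->
  exists O, [/\ odd O, 0 < O, O <= N, oddred O & GoodOdd N O].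
Proof.
elim/ltn_ind: N => N IH oN N0.
case: (classic (oddred N)) => Hred.
  by exists N; split=> //; exact: GoodOdd_refl.
have [p [q [pp [pq [p2 [q2 Hn]]]]]] : exists p q, prime p /\ prime q /\ p <> 2 /\ q <> 2 /\
    ~ Rlt (INR ((logn p N).+1 %/ (logn q N).+2)) (Rdiv (ln (INR q)) (ln (INR p))).
  apply: NNPP => Hno; apply: Hred => p q pp pq p2 q2; apply: NNPP => H; apply: Hno.
  by exists p, q.
set A := logn p N in Hn *; set B := logn q N in Hn *; set t := A.+1 %/ B.+2 in Hn *.
have p1 := prime_gt1 pp; have q1 := prime_gt1 pq.
have tpos : 0 < t.
  case: (posnP t) => // t0; exfalso; apply: Hn; rewrite t0 /=.
  exact: ratio_pos.
have pq_ne : p != q.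
  apply/eqP=> E; move: tpos; rewrite /t /A /B E divn_small //.
have qpt : q <= p ^ t := ratio_pow p1 q1 Hn.
have tAB : t * B.+2 <= A.+1 by rewrite /t leq_trunc_div.
case: (split_trip pp pq pq_ne N0) => K [cpK cqK EN].
have EN' : N = Nn p q A B K by [].
have G := opS pp pq pq_ne cpK cqK tpos qpt tAB.
have NpE' := NpE pq_ne K tpos tAB.
have qlt : q < p ^ t.
  rewrite ltn_neqAle qpt andbT; apply/eqP=> E; move/negP: pq_ne; apply.
  rewrite -(dvdn_prime2 pp pq) E; case: t tpos {E qpt tAB G NpE' Hn} => // t' _.
  by rewrite expnS dvdn_mulr.
set N' := Np p q A B t K in G NpE'.
have Nlt : N' < N.
  have pt0 : 0 < p ^ t by rewrite expn_gt0 prime_gt0.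
  rewrite -(ltn_pmul2r pt0) NpE' -EN' ltn_pmul2l //.
have KN : K %| N by rewrite {1}EN dvdn_mull.
have oK : odd K by apply: dvdn_odd KN oN.
have op := odd_of_prime pp p2; have oq := odd_of_prime pq q2.
have oN' : odd N' by rewrite /N' /Np !oddM !oddX op oq oK !orbT.
have N'0 : 0 < N' by rewrite /N' /Np !muln_gt0 !expn_gt0 (prime_gt0 pp) (prime_gt0 pq) (cop_pos pp cpK).
case: (IH N' Nlt oN' N'0) => O [oO O0 ON' rO G'].
exists O; split=> //; first exact: leq_trans ON' (ltnW Nlt).
rewrite EN'; apply: GoodOdd_trans G G' => //; by rewrite -EN'.
Qed.


Definition prodl (s : seq nat) := \prod_(q <- s) q.

Lemma prodl_gt0 s : all prime s -> 0 < prodl s.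
Proof.
elim: s => [|a s IH] /=; first by rewrite /prodl big_nil.
by case/andP=> pa Hs; rewrite /prodl big_cons muln_gt0 prime_gt0 // IH.
Qed.

Lemma prodl_cat s1 s2 : prodl (s1 ++ s2) = prodl s1 * prodl s2.
Proof. by rewrite /prodl big_cat. Qed.

Lemma prime_dvd_prodl r s : prime r -> all prime s -> r %| prodl s -> r \in s.
Proof.
move=> pr; elim: s => [|a s IH] /=; first by rewrite /prodl big_nil dvdn1 => _ /eqP E; rewrite E in pr.
case/andP=> pa Hs; rewrite /prodl big_cons Euclid_dvdM // => /orP[H|H].
  by rewrite inE (eqP (_ : r == a)) ?eqxx // -dvdn_prime2.
by rewrite inE IH ?orbT.
Qed.

Lemma odd_prodl s : all odd s -> odd (prodl s).
Proof.
elim: s => [|a s IH] /=; first by rewrite /prodl big_nil.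
by case/andP=> oa Hs; rewrite /prodl big_cons oddM oa IH.
Qed.

Section Stage2.
Variable x : R.
Variables (qs : seq nat).
Definition pp i := prodl (take i qs).

Fixpoint pidx (c i : nat) : nat :=
  if leRb (c * pp i) x then i else
  match i with 0 => 0 | i'.+1 => pidx c i' end.

Lemma pidx_le c i : pidx c i <= i.
Proof. elim: i => [|i IH] /=; case: ifP => //; lia. Qed.

Lemma pidx_ok c i : leRb c x -> leRb (c * pp (pidx c i)) x.
Proof.
move=> Hc; elim: i => [|i IH] /=; case: ifP => // _.
by rewrite /pp take0 /prodl big_nil muln1.
Qed.

Lemma pidx_max c i : pidx c i < i -> ~~ leRb (c * pp (pidx c i).+1) x.
Proof.
elim: i => [|i IH] //=; case: ifP => [_|He]; first lia.
have := pidx_le c i; rewrite leq_eqVlt => /orP[/eqP ->|lt _]; first by rewrite He.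
exact: IH.
Qed.
End Stage2.

Lemma stage2_le (x : R) e1 e2 O qs : odd O -> 0 < O ->
  all prime qs -> all odd qs -> sorted leq qs -> coprime O (prodl qs) ->
  2 ^ e1 <= 2 ^ e2 * prodl qs -> all (fun q => q <= 3 * 2 ^ e2) qs ->
  size (maxdivs x (O * 2 ^ e1)) <= size (maxdivs x ((O * prodl qs) * 2 ^ e2)).
Proof.
move=> oO O0 Pq Oq Sq cOQ Hle Hq3.
set Q := prodl qs in cOQ Hle *.
have Q0 : 0 < Q := prodl_gt0 Pq.
have ppQ : forall i, pp qs i * prodl (drop i qs) = Q.
  by move=> i; rewrite /pp -prodl_cat cat_take_drop.
have pp0 : forall i, 0 < pp qs i.
  by move=> i; have := Q0; rewrite -(ppQ i) muln_gt0 => /andP[].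
have allD : forall i, all prime (drop i qs).
  by move=> i; move: Pq; rewrite -{1}(cat_take_drop i qs) all_cat => /andP[].
have ppS : forall i, i < size qs -> pp qs i.+1 = pp qs i * nth 0 qs i.
  by move=> i lt; rewrite /pp (take_nth 0 lt) /prodl big_rcons.
have oOQ : odd (O * Q) by rewrite oddM oO odd_prodl.
have OQ0 : 0 < O * Q by rewrite muln_gt0 O0 Q0.
apply: (CL (h := fun c => c * pp qs (pidx x qs c (size qs)))) => //.
- move=> c [Hc Hx Hr].
  set i := pidx x qs c (size qs).
  have c0 : 0 < c by apply: dvdn_gt0 Hc.
  have ppi0 := pp0 i.
  split.
  + by apply: dvdn_mul => //; rewrite -(ppQ i) dvdn_mulr.
  + exact: pidx_ok.
  + move=> r pr H.
    have r3 : 0 < r by apply: prime_gt0.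
    case/dvdnP: Hc => O' EO.
    have H' : r %| O' * prodl (drop i qs).
      have cp0 : 0 < c * pp qs i by rewrite muln_gt0 c0 ppi0.
      rewrite -(dvdn_pmul2l cp0).
      have E1 : c * pp qs i * r = r * (c * pp qs i) by ring.
      have E2 : c * pp qs i * (O' * prodl (drop i qs)) = O * Q by rewrite EO -(ppQ i); ring.
      by rewrite E1 E2.
    have ilt : i <= size qs by apply: pidx_le.
    move: H'; rewrite Euclid_dvdM // => /orP[H1|H2].
    * have rc : r * c %| O by rewrite EO dvdn_pmul2r.
      have := Hr _ pr rc; apply: contra => HH.
      have or : odd r by apply: dvdn_odd oO; apply: dvdn_trans rc; apply: dvdn_mulr.
      have r3' : 2 < r by apply: odd_prime_gt2.
      move: ilt; rewrite leq_eqVlt => /orP[/eqP Ei|lt].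
      -- apply: leRb_dc HH.
         have EQ : pp qs i = Q by rewrite Ei /pp take_size.
         have -> : c * pp qs i * 2 ^ e2 * r = c * (2 ^ e2 * Q) * r by rewrite EQ; ring.
         by rewrite leq_mul2r leq_mul2l Hle !orbT.
      -- exfalso; move/negP: (pidx_max lt); apply; apply: leRb_dc HH.
         rewrite -/i ppS //.
         have : nth 0 qs i <= 3 * 2 ^ e2 by apply: (allP Hq3); apply: mem_nth.
         move=> Hn.
         have : c * pp qs i * nth 0 qs i <= c * pp qs i * (3 * 2 ^ e2) by rewrite leq_mul2l Hn orbT.
         move=> H3; apply: (leq_trans _ (leq_trans H3 _)); first by rewrite mulnA.
         have -> : c * pp qs i * (3 * 2 ^ e2) = (c * pp qs i * 2 ^ e2) * 3 by ring.
         by rewrite leq_mul2l r3' orbT.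
    * have rin := prime_dvd_prodl pr (allD i) H2.
      have lt : i < size qs.
        rewrite ltnNge; apply/negP=> ge; move: rin; by rewrite drop_oversize.
      move: rin; rewrite (drop_nth 0 lt) inE => /orP[/eqP Er|Hin].
      -- move/negP: (pidx_max lt); rewrite -/i => Hn; apply/negP => HH; apply: Hn.
         apply: leRb_dc HH; rewrite ppS // -Er mulnA.
         by rewrite leq_mul2r leq_pmulr ?expn_gt0 // orbT.
      -- have Hs : sorted leq (drop i qs) by apply: drop_sorted.
         move: Hs; rewrite (drop_nth 0 lt) /= => Hp.
         have := order_path_min leq_trans Hp => /allP /(_ _ Hin) qr.
         move/negP: (pidx_max lt); rewrite -/i => Hn; apply/negP => HH; apply: Hn.
         apply: leRb_dc HH; rewrite ppS //.
         apply: leq_trans (_ : c * (pp qs i * r) <= _).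
           by rewrite leq_mul2l leq_mul2l qr !orbT.
         have -> : c * pp qs i * 2 ^ e2 * r = c * (pp qs i * r) * 2 ^ e2 by ring.
         by rewrite leq_pmulr ?expn_gt0.
- move=> c1 c2 [H1 _ _] [H2 _ _] /= E.
  set i1 := pidx x qs c1 (size qs) in E; set i2 := pidx x qs c2 (size qs) in E.
  have d1 : pp qs i1 %| Q by rewrite -(ppQ i1) dvdn_mulr.
  have d2 : pp qs i2 %| Q by rewrite -(ppQ i2) dvdn_mulr.
  have c12 : c1 %| c2.
    have cop : coprime c1 (pp qs i2) by apply: (coprime_dvdr d2); apply: (coprime_dvdl H1).
    by rewrite -(Gauss_dvdl _ cop) -E dvdn_mulr.
  have c21 : c2 %| c1.
    have cop : coprime c2 (pp qs i1) by apply: (coprime_dvdr d1); apply: (coprime_dvdl H2).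
    by rewrite -(Gauss_dvdl _ cop) E dvdn_mulr.
  by apply/eqP; rewrite eqn_dvd c12 c21.
Qed.


Lemma logn_odd_part p M e : prime p -> p <> 2 -> 0 < M -> logn p (M * 2 ^ e) = logn p M.
Proof.
move=> pp p2 M0; rewrite lognM ?expn_gt0 // lognX (logn_prime p (isT : prime 2)).
by rewrite (introF eqP p2) /= muln0 addn0.
Qed.

Lemma logn2_part M e : odd M -> logn 2 (M * 2 ^ e) = e.
Proof. by move=> oM; rewrite logn_Gauss ?coprime2n // pfactorK. Qed.

Lemma logn0_ndvd q M : prime q -> 0 < M -> logn q M = 0 -> ~~ (q %| M).
Proof.
move=> pq M0 H; apply/negP=> d.
have : 0 < logn q M by rewrite logn_gt0 mem_primes pq M0 d.
by rewrite H.
Qed.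

Lemma reduced_of M e : odd M -> 0 < M -> oddred M ->
  (forall r, prime r -> r <> 2 -> ~~ (r %| M) -> 2 ^ e < 8 * r ^ 2) ->
  reduced (M * 2 ^ e).
Proof.
move=> oM M0 rM H2; split; first by rewrite muln_gt0 M0 expn_gt0.
split.
  move=> p q pp pq p2 q2; rewrite !logn_odd_part //; exact: rM.
move=> q pq; rewrite logn2_part //.
case: (eqVneq q 2) => [->|q2].
  by rewrite logn2_part // => ->.
rewrite logn_odd_part //; last by apply/eqP.
move=> H; apply: H2 => //; first by apply/eqP.
exact: logn0_ndvd.
Qed.

Section Q0.
Variable O : nat.
Hypotheses (oO : odd O) (O0 : 0 < O) (rO : oddred O).

Lemma q0_ex : exists q, prime q && odd q && ~~ (q %| O).
Proof.
case: (prime_above (maxn O 2)) => p; rewrite gtn_max => /andP[Op p2] pp.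
exists p; rewrite pp /=.
have : odd p by case: (even_prime pp) => // E; rewrite E in p2.
move=> -> /=; apply/negP=> d; have := dvdn_leq O0 d; lia.
Qed.

Definition q0 := ex_minn q0_ex.

Lemma q0_spec : [/\ prime q0, odd q0, ~~ (q0 %| O) &
  forall q, prime q -> odd q -> q < q0 -> q %| O].
Proof.
rewrite /q0; case: ex_minnP => q /andP[/andP[pq oq] nd] Hmin; split=> //.
move=> r pr or lt; apply: contraT => nd'.
have := Hmin r; rewrite pr or nd' /= => /(_ isT); lia.
Qed.

Lemma prime_dvd_lt_q0 p : prime p -> p %| O -> p < q0.
Proof.
move=> pp d; have [pq0 oq0 nd _] := q0_spec.
have op : odd p by apply: dvdn_odd d oO.
have p2 : p <> 2 by move=> E; rewrite E in op.
have q2 : q0 <> 2 by move=> E; rewrite E in oq0.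
case: (ltngtP p q0) => // [lt|E]; last by rewrite -E d in nd.
exfalso.
have := rO pp pq0 p2 q2.
have -> : logn q0 O = 0.
  by apply/eqP; rewrite -leqn0 leqNgt logn_gt0 mem_primes pq0 O0 /= (negbTE nd).
have ap : 0 < logn p O by rewrite logn_gt0 mem_primes pp O0 d.
have h1 : 1 <= (logn p O).+1 %/ 2 by rewrite divn_gt0 //; lia.
have := INR_ge1 h1; have := ratio_lt1 (prime_gt1 pq0) lt; lra.
Qed.

End Q0.


Lemma logn_prodl p s : prime p -> all prime s -> logn p (prodl s) = count_mem p s.
Proof.
move=> pp; elim: s => [|a s IH] /=; first by rewrite /prodl big_nil logn1.
case/andP=> pa Hs; have h := prodl_gt0 Hs; rewrite /prodl in h.
rewrite /prodl big_cons lognM ?(prime_gt0 pa) ?h //.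
by rewrite (logn_prime p pa) -/(prodl s) IH // eq_sym.
Qed.

Lemma coprime_prodl O s : (forall p, p \in s -> coprime O p) -> coprime O (prodl s).
Proof.
elim: s => [|a s IH] H; first by rewrite /prodl big_nil coprimen1.
rewrite /prodl big_cons coprimeMr H ?mem_head //= IH // => p ps.
by apply: H; rewrite inE ps orbT.
Qed.

Section Stage2Choice.
Variables (O e1 : nat).
Hypotheses (oO : odd O) (O0 : 0 < O) (rO : oddred O).
Let q0 := q0 oO O0.
Hypothesis (Hbig : 8 * q0 ^ 2 <= 2 ^ e1).

Let q0s := q0_spec oO O0.

Definition qsL L := [seq p <- index_iota q0 L.+1 | prime p].
Definition PPL L := \prod_(q0 <= p < L.+1 | prime p) p.

Lemma PPL_prodl L : prodl (qsL L) = PPL L.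
Proof. by rewrite /prodl /qsL big_filter. Qed.

Lemma mem_qsL L p : (p \in qsL L) = [&& prime p, q0 <= p & p <= L].
Proof. by rewrite mem_filter mem_index_iota ltnS andbC. Qed.

Lemma qsL_prime L : all prime (qsL L).
Proof. by apply/allP=> p; rewrite mem_qsL => /andP[]. Qed.

Lemma q0_gt2 : 2 < q0.
Proof. by case: q0s => pq oq _ _; apply: odd_prime_gt2. Qed.

Lemma qsL_odd L : all odd (qsL L).
Proof.
apply/allP=> p; rewrite mem_qsL => /and3P[pp qp _].
case: (even_prime pp) => // E; have := q0_gt2; lia.
Qed.

Lemma qsL_sorted L : sorted leq (qsL L).
Proof.
apply: (@sub_sorted _ ltn); first by move=> a b /ltnW.
apply: (sorted_filter ltn_trans); exact: iota_ltn_sorted.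
Qed.

Lemma qsL_uniq L : uniq (qsL L).
Proof. by rewrite filter_uniq // iota_uniq. Qed.

Lemma PPL_gt0 L : 0 < PPL L.
Proof. by rewrite -PPL_prodl prodl_gt0 // qsL_prime. Qed.

Lemma PPL_S L : q0 <= L.+1 -> PPL L.+1 = PPL L * (if prime L.+1 then L.+1 else 1).
Proof. by move=> h; rewrite /PPL big_mkcond big_nat_recr //= -big_mkcond. Qed.

Definition Bnd := 3 * 2 ^ e1.
Definition PL L := (q0 <= L) && (L * PPL L <= Bnd).

Lemma PL_ex : exists L, PL L.
Proof.
exists q0; rewrite /PL leqnn /=.
have : PPL q0 = q0.
  rewrite /PPL big_mkcond big_nat1.
  by case: q0s => -> _ _ _.
move=> ->; rewrite /Bnd; move: Hbig; lia.
Qed.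

Lemma PL_bnd L : PL L -> L <= Bnd.
Proof.
case/andP=> _ H; apply: leq_trans H; apply: leq_pmulr; exact: PPL_gt0.
Qed.

Definition Lstar := ex_maxn PL_ex PL_bnd.

Lemma Lstar_spec : PL Lstar /\ forall L, PL L -> L <= Lstar.
Proof. by rewrite /Lstar; case: ex_maxnP. Qed.

Lemma qp_ex : exists p, prime p && (Lstar < p).
Proof. by case: (prime_above Lstar) => p lt pp; exists p; rewrite pp lt. Qed.

Definition qp := ex_minn qp_ex.

Lemma qp_spec : [/\ prime qp, Lstar < qp & forall p, prime p -> Lstar < p -> qp <= p].
Proof.
rewrite /qp; case: ex_minnP => p /andP[pp lt] Hmin; split=> // r pr lr.
by apply: Hmin; rewrite pr lr.
Qed.

Lemma q0_Lstar : q0 <= Lstar.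
Proof. by case: Lstar_spec => /andP[]. Qed.

Lemma PPL_gap d : Lstar + d < qp -> PPL (Lstar + d) = PPL Lstar.
Proof.
elim: d => [|d IH] lt; first by rewrite addn0.
have [pq lq Hmin] := qp_spec.
rewrite addnS PPL_S; last by have := q0_Lstar; lia.
rewrite IH; last by lia.
case: ifP => [pr|_]; last by rewrite muln1.
have := Hmin _ pr; rewrite -addnS; lia.
Qed.

Lemma PPL_qp : PPL qp = PPL Lstar * qp.
Proof.
have [pq lq Hmin] := qp_spec.
have E : qp = (Lstar + (qp - Lstar).-1).+1 by lia.
rewrite {1}E PPL_S; last by have := q0_Lstar; lia.
rewrite -E pq PPL_gap //; lia.
Qed.

Lemma Bnd_lt : Bnd < qp * (PPL Lstar * qp).
Proof.
have [pq lq Hmin] := qp_spec.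
case: Lstar_spec => _ Hmax.
rewrite -PPL_qp ltnNge; apply/negP=> H.
have : PL qp by rewrite /PL H andbT; have := q0_Lstar; lia.
move/Hmax; lia.
Qed.


Let qs := qsL Lstar.
Let Q := PPL Lstar.

Lemma e2_ex : exists e, 2 ^ e1 <= 2 ^ e * Q.
Proof. by exists e1; apply: leq_pmulr; apply: PPL_gt0. Qed.

Definition e2 := ex_minn e2_ex.

Lemma e2_spec : 2 ^ e1 <= 2 ^ e2 * Q /\ forall e, 2 ^ e1 <= 2 ^ e * Q -> e2 <= e.
Proof. by rewrite /e2; case: ex_minnP. Qed.

Lemma LQ : Lstar * Q <= Bnd.
Proof. by case: Lstar_spec => /andP[]. Qed.

Lemma Q_odd : odd Q.
Proof. by rewrite /Q -PPL_prodl odd_prodl // qsL_odd. Qed.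

Lemma Q_le : Q <= 2 ^ e1.
Proof.
have := LQ; have := q0_Lstar; have := q0_gt2; rewrite /Bnd => a b c.
have : 3 * Q <= Lstar * Q by rewrite leq_mul2r; apply/orP; right; lia.
lia.
Qed.

Lemma e2_pos : 0 < e2.
Proof.
case: e2_spec => H _; case: (posnP e2) => // E; exfalso.
move: H; rewrite E expn0 mul1n => H.
have EQ : Q = 2 ^ e1 by apply/eqP; rewrite eqn_leq Q_le H.
have e10 : 0 < e1.
  case: (posnP e1) => // E1; move: Hbig; rewrite E1 expn0.
  have := q0_gt2; lia.
have := Q_odd; rewrite EQ oddX /= orbF => /eqP E0; by rewrite E0 in e10.
Qed.

Lemma e2_min : 2 ^ e2.-1 * Q < 2 ^ e1.
Proof.
case: e2_spec => _ H; rewrite ltnNge; apply/negP => /H; have := e2_pos; lia.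
Qed.

Lemma L_le : Lstar <= 3 * 2 ^ e2.
Proof.
have Q0 : 0 < Q by apply: PPL_gt0.
rewrite -(leq_pmul2r Q0); apply: leq_trans LQ _.
rewrite /Bnd -mulnA leq_mul2l; apply/orP; right; by case: e2_spec.
Qed.

Lemma notin_gt r : prime r -> odd r -> ~~ (r %| O * Q) -> Lstar < r.
Proof.
move=> pr or nd.
have [pq0 oq0 nq0 Hq0] := q0s.
have nO : ~~ (r %| O) by apply: contra nd => d; apply: dvdn_mulr.
have rq0 : q0 <= r by rewrite leqNgt; apply: contra nO; apply: Hq0.
rewrite ltnNge; apply/negP => rL; move/negP: nd; apply.
apply: dvdn_mull; rewrite /Q -PPL_prodl.
rewrite /prodl (big_rem r) /=; first exact: dvdn_mulr.
by rewrite mem_qsL pr rq0 rL.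
Qed.

Lemma m2_two r : prime r -> r <> 2 -> ~~ (r %| O * Q) -> 2 ^ e2 < 8 * r ^ 2.
Proof.
move=> pr r2 nd.
have or := odd_of_prime pr r2.
have lr := notin_gt pr or nd.
have [pq lq Hmin] := qp_spec.
have qr : qp <= r by apply: Hmin.
have Q0 : 0 < Q by apply: PPL_gt0.
have A1 : 3 * 2 ^ e2.-1 * Q < qp * qp * Q.
  have := e2_min; have := Bnd_lt; rewrite /Bnd -/Q => h1 h2.
  have : 3 * 2 ^ e2.-1 * Q < 3 * 2 ^ e1 by rewrite -mulnA ltn_pmul2l.
  move=> h3; apply: (ltn_trans h3).
  have -> : qp * qp * Q = qp * (Q * qp) by rewrite [Q * qp]mulnC mulnA.
  exact: h1.
have A2 : 3 * 2 ^ e2.-1 < qp * qp by rewrite -(ltn_pmul2r Q0).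
have A3 : qp * qp <= r * r by apply: leq_mul.
have E : 2 ^ e2 = 2 * 2 ^ e2.-1 by rewrite -expnS prednK // e2_pos.
rewrite E expnS expn1.
move: A2 A3; clear; lia.
Qed.

Lemma coprime_OQ : coprime O Q.
Proof.
rewrite /Q -PPL_prodl; apply: coprime_prodl => p.
rewrite mem_qsL => /and3P[pp qp' _]; rewrite coprime_sym prime_coprime //.
apply/negP => d; have := prime_dvd_lt_q0 oO O0 rO pp d; rewrite -/q0; lia.
Qed.

Lemma logn_Q p : prime p -> logn p Q = (p \in qs).
Proof.
move=> pp; rewrite /Q -PPL_prodl logn_prodl ?qsL_prime // count_uniq_mem //.
exact: qsL_uniq.
Qed.

Lemma oddred_OQ : oddred (O * Q).
Proof.
have Q0 : 0 < Q by apply: PPL_gt0.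
move=> p q pp pq p2 q2.
rewrite !lognM // !logn_Q //.
case: (boolP (p \in qs)) => ps.
- have lpO : logn p O = 0.
    apply/eqP; rewrite -leqn0 leqNgt logn_gt0 mem_primes pp O0 /=.
    apply/negP => d; have := prime_dvd_lt_q0 oO O0 rO pp d.
    by move: ps; rewrite /qs mem_qsL -/q0 => /and3P[_ h _]; lia.
  rewrite lpO add0n.
  case: (posnP (logn q O + (q \in qs))) => Hq.
  + rewrite Hq /=.
    have nd : ~~ (q %| O * Q).
      apply/negP => d; have : 0 < logn q (O * Q) by rewrite logn_gt0 mem_primes pq muln_gt0 O0 Q0 d.
      by rewrite lognM // logn_Q // Hq.
    have lq := notin_gt pq (odd_of_prime pq q2) nd.
    have pL : p <= Lstar by move: ps; rewrite /qs mem_qsL => /and3P[].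
    apply: ratio_gt1; first exact: prime_gt1.
    exact: leq_ltn_trans pL lq.
  + rewrite divn_small; last by lia.
    by apply: ratio_pos; apply: prime_gt1.
- rewrite addn0.
  apply: Rle_lt_trans (rO pp pq p2 q2).
  apply: le_INR; apply/leP; apply: leq_div2l; first by [].
  by rewrite ltnS ltnS leq_addr.
Qed.

Lemma stage2_exists : exists m2, [/\ reduced m2,
  O * 2 ^ e1 <= m2, m2 <= (O * 2 ^ e1).*2 - 2 &
  forall x, size (maxdivs x (O * 2 ^ e1)) <= size (maxdivs x m2)].
Proof.
have Q0 : 0 < Q by apply: PPL_gt0.
exists ((O * Q) * 2 ^ e2); split.
- apply: reduced_of.
  + by rewrite oddM oO Q_odd.
  + by rewrite muln_gt0 O0 Q0.
  + exact: oddred_OQ.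
  + exact: m2_two.
- case: e2_spec => H _; rewrite -mulnA leq_mul2l (mulnC Q) H orbT //.
- have := e2_min; have E : 2 ^ e2 = 2 * 2 ^ e2.-1 by rewrite -expnS prednK // e2_pos.
  rewrite E => h.
  have : O * (2 ^ e2.-1 * Q) < O * 2 ^ e1 by rewrite ltn_pmul2l.
  have -> : O * Q * (2 * 2 ^ e2.-1) = 2 * (O * (2 ^ e2.-1 * Q)).
    by ring.
  move: (O * _) (O * 2 ^ e1) => a b; clear; lia.
- move=> x; rewrite /Q -PPL_prodl.
  have c1 : coprime O (prodl (qsL Lstar)) by rewrite PPL_prodl coprime_OQ.
  have c2 : 2 ^ e1 <= 2 ^ e2 * prodl (qsL Lstar) by rewrite PPL_prodl; case: e2_spec.
  have c3 : all (fun q => q <= 3 * 2 ^ e2) (qsL Lstar).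
    apply/allP => q; rewrite mem_qsL => /and3P[_ _ qL]; apply: leq_trans qL _.
    exact: L_le.
  exact: (stage2_le x oO O0 (qsL_prime _) (qsL_odd _) (qsL_sorted _) c1 c2 c3).
Qed.
End Stage2Choice.


Theorem theorem3p13 :
  forall n : nat, 2 <= n ->
  exists m : nat, reduced m /\ n <= m <= 4 * n - 6 /\
    (forall x : R, size (maxdivs x n) <= size (maxdivs x m)).
Proof.
move=> n n2.
have n0 : 0 < n by lia.
case: (odd_decomp n0) => N oN En.
have N0 : 0 < N by case: (posnP N) En => // ->; rewrite mul0n; lia.
case: (stage1 oN N0) => O [oO O0 ON rO G].
have e_ex : exists e, n <= O * 2 ^ e.
  exists n; apply: leq_trans (ltnW (ltn_expl n (isT : 1 < 2))) _.
  by apply: leq_pmull.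
pose e1 := ex_minn e_ex.
have [H1 Hmin] : n <= O * 2 ^ e1 /\ forall e, n <= O * 2 ^ e -> e1 <= e.
  by rewrite /e1; case: ex_minnP.
set m1 := O * 2 ^ e1 in H1.
have Hm1 : m1 <= n.*2 - 2.
  case: (posnP e1) => [E|E].
    have : m1 <= n by rewrite /m1 E expn0 muln1 (leq_trans ON) // En leq_pmulr // expn_gt0.
    lia.
  have : ~~ (n <= O * 2 ^ e1.-1) by apply/negP => /Hmin; lia.
  rewrite -ltnNge => lt.
  have : m1 = (O * 2 ^ e1.-1).*2 by rewrite /m1 -mul2n mulnCA -expnS prednK.
  move: lt; move: (O * 2 ^ e1.-1) => X; lia.
have S1 : forall x, size (maxdivs x n) <= size (maxdivs x m1).
  move=> x; rewrite {1}En; apply: stage1_le => //; by rewrite -En.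
case: (leqP (8 * q0 oO O0 ^ 2) (2 ^ e1)) => Hb.
- case: (stage2_exists rO Hb) => m2 [R2 L2 U2 S2].
  exists m2; split=> //; split.
    rewrite (leq_trans H1 L2) /=; move: U2 Hm1; rewrite -/m1; lia.
  move=> x; exact: leq_trans (S1 x) (S2 x).
- exists m1; split.
    apply: reduced_of => // r pr r2 nd.
    have [pq0 oq0 nq0 Hq0] := q0_spec oO O0.
    have or := odd_of_prime pr r2.
    have rq : q0 oO O0 <= r by rewrite leqNgt; apply: contra nd; apply: Hq0.
    apply: leq_trans Hb _; rewrite leq_mul2l /=.
    by rewrite leq_sqr.
  split; last exact: S1.
  by rewrite H1 /=; move: Hm1; lia.
Qed.
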